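(* Let $g\le3$ and let $W$ be a $\mathbb{C}$-vector space of dimension $g$ of quadratic forms on $\mathbb{C}^g$, containing a non-degenerate quadratic form. Then there exists a vector $v\in\mathbb{C}^g$ which is not in the kernel of any non-zero quadratic form in $W$.
   Context: The kernel of a quadratic form $q$ on $\mathbb{C}^g$ is the kernel of its associated symmetric bilinear form (equivalently of its symmetric matrix). *)

(* Defs.v *)
From HB Require Import structures.
From mathcomp Require Import all_boot all_algebra.
From mathcomp Require Import reals complex.
Set Implicit Arguments. Unset Strict Implicit. Unset Printing Implicit Defensive.
Import GRing.Theory.
Local Open Scope ring_scope.

(* The complex numbers are modelled as R[i] for R : realType (the reals).
   A quadratic form on C^g is identified with its symmetric g x g matrix. *)

Definition is_qform (K : fieldType) (g : nat) (q : 'M[K]_g) : bool := q^T == q.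

Definition qf_nondegenerate (K : fieldType) (g : nat) (q : 'M[K]_g) : bool :=
  q \in unitmx.

Definition in_qkernel (K : fieldType) (g : nat) (q : 'M[K]_g) (v : 'cV[K]_g) : bool :=
  q *m v == 0.

(* Main.v *)
Require Import Defs.
From HB Require Import structures.
From mathcomp Require Import all_boot all_algebra.
From mathcomp Require Import reals complex.
From mathcomp Require Import ring.
From Stdlib Require Import Classical_Prop.
Import GRing.Theory.
Local Open Scope ring_scope.

Module Helpers.
Set Implicit Arguments. Unset Strict Implicit. Unset Printing Implicit Defensive.
Import Num.Theory.

Section Cong.
Variable C : numClosedFieldType.

Lemma sum_delta2 n (f : 'I_n -> C) a b t :
  \sum_k f k * ((k == a)%:R + t * (k == b)%:R) = f a + t * f b.
Proof.
have E c : \sum_k f k * (k == c)%:R = f c.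
  rewrite (bigD1 c) //= eqxx mulr1 big1 ?addr0 // => k /negbTE ->.
  by rewrite mulr0.
under eq_bigr => k _ do rewrite mulrDr mulrCA.
by rewrite big_split /= -mulr_sumr !E.
Qed.

Lemma stepA n (q : 'M[C]_n.+1) : q^T = q -> q \in unitmx ->
  exists2 T : 'M[C]_n.+1, T \in unitmx & (T^T *m q *m T) ord0 ord0 != 0.
Proof.
move=> qs qu.
have [j qj] : exists j, q ord0 j != 0.
  case: (pickP (fun j => q ord0 j != 0)) => [j Hj|H]; first by exists j.
  have : (q *m invmx q) ord0 ord0 = 0.
    rewrite mxE big1 // => k _; move/negbFE: (H k) => /eqP ->.
    by rewrite mul0r.
  by rewrite mulmxV // mxE eqxx /= => /eqP; rewrite oner_eq0.
have qsym a b : q a b = q b a.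
  by rewrite -{1}qs mxE.
case q00: (q ord0 ord0 == 0); last first.
  by exists 1%:M; rewrite ?unitmx1 // trmx1 mul1mx mulmx1 q00.
have j0 : j != ord0 by apply: contraNneq qj => ->; rewrite q00.
pose X t : 'M[C]_n.+1 := 1%:M + t *: delta_mx j ord0.
have Xe t k : X t k ord0 = (k == ord0)%:R + t * (k == j)%:R.
  by rewrite !mxE eqxx andbT.
have val t : (( X t)^T *m q *m X t) ord0 ord0 = q ord0 ord0 + t * q ord0 j
    + t * (q j ord0 + t * q j j).
  rewrite mxE.
  under eq_bigr => l _ do rewrite Xe.
  rewrite sum_delta2 !mxE.
  under eq_bigr => k _ do rewrite mxE Xe mulrC.
  under [X in _ + t * X]eq_bigr => k _ do rewrite mxE Xe mulrC.
  by rewrite !sum_delta2 (qsym j ord0).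
have Xu t : X t \in unitmx.
  have : X t *m X (- t) = 1%:M.
    rewrite /X mulmxDl !mulmxDr !mul1mx mulmx1 -!scalemxAl -!scalemxAr.
    rewrite mul_delta_mx_cond eq_sym (negbTE j0) mulr0n scaler0.
    by rewrite scaler0 addr0 scaleNr addrNK.
  by case/mulmx1_unit.
have q00' : q ord0 ord0 = 0 by apply/eqP.
case e1: (2 * q ord0 j + q j j == 0).
- exists (X (-1)) => //; rewrite val q00' (qsym j ord0).
  apply: contra qj => /eqP h.
  have : 4 * q ord0 j = 0.
    move/eqP: e1 => e1.
    have k : 4 * q ord0 j = (2 * q ord0 j + q j j) - (0 + -1 * q ord0 j + -1 * (q ord0 j + -1 * q j j)) by ring.
    by rewrite k e1 h subr0.
  move/eqP; rewrite mulf_eq0 => /orP [|//].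
  by rewrite pnatr_eq0.
- exists (X 1) => //; rewrite val q00' (qsym j ord0).
  have -> : 0 + 1 * q ord0 j + 1 * (q ord0 j + 1 * q j j) = 2 * q ord0 j + q j j by ring.
  by rewrite e1.
Qed.
Lemma stepB n (q : 'M[C]_(1 + n)) : q^T = q -> q \in unitmx ->
  q ord0 ord0 != 0 ->
  (forall q' : 'M[C]_n, q'^T = q' -> q' \in unitmx ->
     exists2 P : 'M[C]_n, P \in unitmx & P^T *m q' *m P = 1%:M) ->
  exists2 P : 'M[C]_(1 + n), P \in unitmx & P^T *m q *m P = 1%:M.
Proof.
move=> qs qu q00 IH.
set d := q ord0 ord0.
set r := ursubmx q; set Q := drsubmx q.
have qb : q = block_mx d%:M r r^T Q.
  have e1 : ulsubmx q = d%:M.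
    rewrite [ulsubmx q]mx11_scalar !mxE.
    by rewrite /d (_ : lshift n 0 = ord0) //; apply/val_inj.
  have e2 : dlsubmx q = r^T by rewrite /r trmx_ursub qs.
  by rewrite -{1}(submxK q) e1 e2.
have Qs : Q^T = Q by rewrite /Q trmx_drsub qs.
set s := sqrtC d.
have s2 : s * s = d by rewrite -expr2 sqrtCK.
have s0 : s != 0 by apply/eqP => s0; move: q00; rewrite -/d -s2 s0 mul0r eqxx.
set E : 'M[C]_(1 + n) := block_mx (s^-1)%:M (- (d^-1 *: r)) 0 1%:M.
set Q' := Q - d^-1 *: (r^T *m r).
have EqE : E^T *m q *m E = block_mx 1%:M 0 0 Q'.
  rewrite qb /E tr_block_mx !mulmx_block !tr_scalar_mx trmx0.
  rewrite !mul0mx !mulmx0 !mul1mx !mulmx1 ?add0r ?addr0.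
  have d0 : d != 0 by [].
  have t3 : (- (d^-1 *: r))^T *m d%:M + r^T = 0.
    by rewrite linearN linearZ /= mul_mx_scalar scalerN scalerA mulfV // scale1r addNr.
  have t1 : (s^-1)%:M *m d%:M *m (s^-1)%:M = 1%:M :> 'M_1.
    by rewrite -!scalar_mxM -s2; congr (_%:M); field.
  have t2 : (s^-1)%:M *m d%:M *m - (d^-1 *: r) + (s^-1)%:M *m r = 0.
    rewrite -scalar_mxM !mul_scalar_mx scalerN scalerA -mulrA mulfV // mulr1.
    by rewrite addNr.
  have t4 : (- (d^-1 *: r))^T *m r + Q = Q'.
    by rewrite linearN linearZ /= mulNmx -scalemxAl addrC.
  by rewrite t1 t2 t3 t4 !mul0mx add0r.
have Eu : E \in unitmx.
  by rewrite unitmxE /E det_ublock det_scalar1 det1 mulr1 unitfE invr_eq0.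
have Q's : Q'^T = Q' by rewrite /Q' linearB linearZ /= trmx_mul trmxK Qs.
have Q'u : Q' \in unitmx.
  have : E^T *m q *m E \in unitmx by rewrite !unitmx_mul unitmx_tr Eu qu.
  by rewrite EqE !unitmxE det_ublock det1 mul1r.
have [P Pu HP] := IH Q' Q's Q'u.
exists (E *m block_mx 1%:M 0 0 P).
  by rewrite unitmx_mul Eu unitmxE det_ublock det1 mul1r -unitmxE.
rewrite trmx_mul !mulmxA -(mulmxA _ E^T) -(mulmxA _ (E^T *m q)) EqE.
rewrite tr_block_mx trmx0 tr_scalar_mx !mulmx_block.
rewrite !mul0mx !mulmx0 !mul1mx !mulmx1 ?add0r ?addr0 HP.
by rewrite mul0mx trmx0 -scalar_mx_block.
Qed.
Lemma cong_id n (q : 'M[C]_n) : q^T = q -> q \in unitmx ->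
  exists2 P : 'M[C]_n, P \in unitmx & P^T *m q *m P = 1%:M.
Proof.
elim: n q => [|n IH] q qs qu.
  by exists 1%:M; [exact: unitmx1 | apply/matrixP => -[]].
have [T Tu Tq] := stepA qs qu.
pose q1 := T^T *m q *m T.
have q1s : q1^T = q1 by rewrite /q1 !trmx_mul trmxK qs mulmxA.
have q1u : q1 \in unitmx by rewrite /q1 !unitmx_mul unitmx_tr Tu qu.
have [P Pu HP] := @stepB n q1 q1s q1u Tq IH.
exists (T *m P); first by rewrite unitmx_mul Tu Pu.
by rewrite trmx_mul -HP /q1 !mulmxA.
Qed.
End Cong.

Section Link.
Variable C : numClosedFieldType.
Definition det3 (u1 u2 u3 v1 v2 v3 w1 w2 w3 : C) :=
  u1 * (v2 * w3 - v3 * w2) - u2 * (v1 * w3 - v3 * w1) + u3 * (v1 * w2 - v2 * w1).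
Definition Fs (a11 a12 a13 a22 a23 a33 b11 b12 b13 b22 b23 b33 x y z : C) :=
  det3 x y z (a11 * x + a12 * y + a13 * z) (a12 * x + a22 * y + a23 * z)
    (a13 * x + a23 * y + a33 * z)
    (b11 * x + b12 * y + b13 * z) (b12 * x + b22 * y + b23 * z)
    (b13 * x + b23 * y + b33 * z).

Definition o30 : 'I_3 := @Ordinal 3 0 isT.
Definition o31 : 'I_3 := @Ordinal 3 1 isT.
Definition o32 : 'I_3 := @Ordinal 3 2 isT.
Lemma sum3 (f : 'I_3 -> C) : \sum_i f i = f o30 + f o31 + f o32.
Proof.
rewrite !big_ord_recl big_ord0 addr0 addrA.
by congr (f _ + f _ + f _); apply/val_inj.
Qed.
Lemma ord3P (i : 'I_3) : [\/ i = o30, i = o31 | i = o32].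
Proof.
case: i => [[|[|[|k]]] Hk].
- by constructor 1; apply/val_inj.
- by constructor 2; apply/val_inj.
- by constructor 3; apply/val_inj.
- by [].
Qed.
Definition p3 (x y z : C) : 'cV[C]_3 := \col_i (nth 0 [:: x; y; z] i).

Lemma det3_dep u1 u2 u3 v1 v2 v3 w1 w2 w3 c0 c1 c2 :
  c0 * w1 + c1 * v1 + c2 * u1 = 0 -> c0 * w2 + c1 * v2 + c2 * u2 = 0 ->
  c0 * w3 + c1 * v3 + c2 * u3 = 0 -> (c0 != 0 \/ c1 != 0 \/ c2 != 0) ->
  det3 u1 u2 u3 v1 v2 v3 w1 w2 w3 = 0.
Proof.
move=> e1 e2 e3 cn; apply/eqP; apply: contraLR isT => dn.
have k0 : c0 * det3 u1 u2 u3 v1 v2 v3 w1 w2 w3 =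
   det3 u1 u2 u3 v1 v2 v3 (c0 * w1 + c1 * v1 + c2 * u1)
     (c0 * w2 + c1 * v2 + c2 * u2) (c0 * w3 + c1 * v3 + c2 * u3).
  by rewrite /det3; ring.
have k1 : c1 * det3 u1 u2 u3 v1 v2 v3 w1 w2 w3 =
   det3 u1 u2 u3 (c0 * w1 + c1 * v1 + c2 * u1)
     (c0 * w2 + c1 * v2 + c2 * u2) (c0 * w3 + c1 * v3 + c2 * u3) w1 w2 w3.
  by rewrite /det3; ring.
have k2 : c2 * det3 u1 u2 u3 v1 v2 v3 w1 w2 w3 =
   det3 (c0 * w1 + c1 * v1 + c2 * u1)
     (c0 * w2 + c1 * v2 + c2 * u2) (c0 * w3 + c1 * v3 + c2 * u3) v1 v2 v3 w1 w2 w3.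
  by rewrite /det3; ring.
rewrite e1 e2 e3 /det3 in k0 k1 k2.
have z0 : (0 : C) * (0 * 0 - 0 * 0) = 0 by rewrite !mul0r.
move: k0 k1 k2.
rewrite ?(mul0r, mulr0, subrr, addr0, sub0r, oppr0) => /eqP k0 /eqP k1 /eqP k2.
move: k0 k1 k2; rewrite !mulf_eq0 (negbTE dn) !orbF => /eqP k0 /eqP k1 /eqP k2.
by case: cn => [/eqP|[/eqP|/eqP]].
Qed.

Lemma link3 (A B : 'M[C]_3) (c0 c1 c2 x y z : C) : A^T = A -> B^T = B ->
  (c0 != 0 \/ c1 != 0 \/ c2 != 0) ->
  (c0 *: B + c1 *: A + c2 *: 1%:M) *m p3 x y z = 0 ->
  Fs (A o30 o30) (A o30 o31) (A o30 o32) (A o31 o31) (A o31 o32) (A o32 o32)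
     (B o30 o30) (B o30 o31) (B o30 o32) (B o31 o31) (B o31 o32) (B o32 o32) x y z = 0.
Proof.
move=> As Bs cn H.
have sA i j : A i j = A j i by rewrite -{1}As mxE.
have sB i j : B i j = B j i by rewrite -{1}Bs mxE.
have E (i : 'I_3) : ((c0 *: B + c1 *: A + c2 *: 1%:M) *m p3 x y z) i ord0 = 0.
  by rewrite H mxE.
move: (E o30) (E o31) (E o32); rewrite !mxE !sum3 !mxE /=.
rewrite (sA o31 o30) (sA o32 o30) (sA o32 o31) (sB o31 o30) (sB o32 o30) (sB o32 o31).
move=> e1 e2 e3.
apply: (@det3_dep _ _ _ _ _ _ _ _ _ c0 c1 c2) => //.
- by rewrite -[RHS]e1; ring.
- by rewrite -[RHS]e2; ring.
- by rewrite -[RHS]e3; ring.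
Qed.
Lemma two_neq0 : (2 : C) != 0. Proof. by rewrite pnatr_eq0. Qed.

Lemma dep5 (u0 u1 u2 u3 u4 w0 w1 w2 w3 w4 : C) :
  u0 * w1 - u1 * w0 = 0 ->
  u0 * w2 - u2 * w0 = 0 ->
  u0 * w3 - u3 * w0 = 0 ->
  u0 * w4 - u4 * w0 = 0 ->
  u1 * w2 - u2 * w1 = 0 ->
  u1 * w3 - u3 * w1 = 0 ->
  u1 * w4 - u4 * w1 = 0 ->
  u2 * w3 - u3 * w2 = 0 ->
  u2 * w4 - u4 * w2 = 0 ->
  u3 * w4 - u4 * w3 = 0 ->
  exists l m : C, (l != 0 \/ m != 0) /\
    [/\ l * u0 + m * w0 = 0, l * u1 + m * w1 = 0, l * u2 + m * w2 = 0,
        l * u3 + m * w3 = 0 & l * u4 + m * w4 = 0].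
Proof.
move=> m01 m02 m03 m04 m12 m13 m14 m23 m24 m34.
have [uk0|uk] := eqVneq u0 0; last first.
  exists w0, (- u0); split; first by right; rewrite oppr_eq0.
  split.
  - by rewrite mulrC mulNr subrr.
  - have -> : w0 * u1 + - u0 * w1 = - (u0 * w1 - u1 * w0) by ring.
    by rewrite m01 oppr0.
  - have -> : w0 * u2 + - u0 * w2 = - (u0 * w2 - u2 * w0) by ring.
    by rewrite m02 oppr0.
  - have -> : w0 * u3 + - u0 * w3 = - (u0 * w3 - u3 * w0) by ring.
    by rewrite m03 oppr0.
  - have -> : w0 * u4 + - u0 * w4 = - (u0 * w4 - u4 * w0) by ring.
    by rewrite m04 oppr0.
have [uk1|uk] := eqVneq u1 0; last first.
  exists w1, (- u1); split; first by right; rewrite oppr_eq0.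
  split.
  - have -> : w1 * u0 + - u1 * w0 = (u0 * w1 - u1 * w0) by ring.
    by rewrite m01.
  - by rewrite mulrC mulNr subrr.
  - have -> : w1 * u2 + - u1 * w2 = - (u1 * w2 - u2 * w1) by ring.
    by rewrite m12 oppr0.
  - have -> : w1 * u3 + - u1 * w3 = - (u1 * w3 - u3 * w1) by ring.
    by rewrite m13 oppr0.
  - have -> : w1 * u4 + - u1 * w4 = - (u1 * w4 - u4 * w1) by ring.
    by rewrite m14 oppr0.
have [uk2|uk] := eqVneq u2 0; last first.
  exists w2, (- u2); split; first by right; rewrite oppr_eq0.
  split.
  - have -> : w2 * u0 + - u2 * w0 = (u0 * w2 - u2 * w0) by ring.
    by rewrite m02.
  - have -> : w2 * u1 + - u2 * w1 = (u1 * w2 - u2 * w1) by ring.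
    by rewrite m12.
  - by rewrite mulrC mulNr subrr.
  - have -> : w2 * u3 + - u2 * w3 = - (u2 * w3 - u3 * w2) by ring.
    by rewrite m23 oppr0.
  - have -> : w2 * u4 + - u2 * w4 = - (u2 * w4 - u4 * w2) by ring.
    by rewrite m24 oppr0.
have [uk3|uk] := eqVneq u3 0; last first.
  exists w3, (- u3); split; first by right; rewrite oppr_eq0.
  split.
  - have -> : w3 * u0 + - u3 * w0 = (u0 * w3 - u3 * w0) by ring.
    by rewrite m03.
  - have -> : w3 * u1 + - u3 * w1 = (u1 * w3 - u3 * w1) by ring.
    by rewrite m13.
  - have -> : w3 * u2 + - u3 * w2 = (u2 * w3 - u3 * w2) by ring.
    by rewrite m23.
  - by rewrite mulrC mulNr subrr.
  - have -> : w3 * u4 + - u3 * w4 = - (u3 * w4 - u4 * w3) by ring.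
    by rewrite m34 oppr0.
have [uk4|uk] := eqVneq u4 0; last first.
  exists w4, (- u4); split; first by right; rewrite oppr_eq0.
  split.
  - have -> : w4 * u0 + - u4 * w0 = (u0 * w4 - u4 * w0) by ring.
    by rewrite m04.
  - have -> : w4 * u1 + - u4 * w1 = (u1 * w4 - u4 * w1) by ring.
    by rewrite m14.
  - have -> : w4 * u2 + - u4 * w2 = (u2 * w4 - u4 * w2) by ring.
    by rewrite m24.
  - have -> : w4 * u3 + - u4 * w3 = (u3 * w4 - u4 * w3) by ring.
    by rewrite m34.
  - by rewrite mulrC mulNr subrr.
exists 1, 0; split; first by left; rewrite oner_eq0.
by rewrite uk0 uk1 uk2 uk3 uk4; split; ring.
Qed.

Lemma core3 (a11 a12 a13 a22 a23 a33 b11 b12 b13 b22 b23 b33 : C) :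
  (forall x y z, Fs a11 a12 a13 a22 a23 a33 b11 b12 b13 b22 b23 b33 x y z = 0) ->
  exists l m : C, (l != 0 \/ m != 0) /\
    [/\ l * (a22 - a11) + m * (b22 - b11) = 0, l * (a33 - a11) + m * (b33 - b11) = 0,
        l * a12 + m * b12 = 0, l * a13 + m * b13 = 0 & l * a23 + m * b23 = 0].
Proof.
move=> H.
apply: dep5.
- have e : 2 * ((a22 - a11) * (b33 - b11) - (a33 - a11) * (b22 - b11)) = (2) * Fs a11 a12 a13 a22 a23 a33 b11 b12 b13 b22 b23 b33 1 0 0 + (2) * Fs a11 a12 a13 a22 a23 a33 b11 b12 b13 b22 b23 b33 0 1 0 + (2) * Fs a11 a12 a13 a22 a23 a33 b11 b12 b13 b22 b23 b33 0 0 1 + (-2) * Fs a11 a12 a13 a22 a23 a33 b11 b12 b13 b22 b23 b33 1 1 0 + (-2) * Fs a11 a12 a13 a22 a23 a33 b11 b12 b13 b22 b23 b33 1 0 1 + (-2) * Fs a11 a12 a13 a22 a23 a33 b11 b12 b13 b22 b23 b33 0 1 1 + (2) * Fs a11 a12 a13 a22 a23 a33 b11 b12 b13 b22 b23 b33 1 1 1 by rewrite /Fs /det3; ring.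
  move: e; rewrite !H !mulr0 ?addr0 => /eqP; rewrite mulf_eq0 (negbTE two_neq0) /=.
  by move/eqP.
- have e : 2 * ((a22 - a11) * b12 - a12 * (b22 - b11)) = (-1) * Fs a11 a12 a13 a22 a23 a33 b11 b12 b13 b22 b23 b33 1 0 1 + (1) * Fs a11 a12 a13 a22 a23 a33 b11 b12 b13 b22 b23 b33 1 0 (-1) + (-1) * Fs a11 a12 a13 a22 a23 a33 b11 b12 b13 b22 b23 b33 0 1 1 + (1) * Fs a11 a12 a13 a22 a23 a33 b11 b12 b13 b22 b23 b33 0 1 (-1) by rewrite /Fs /det3; ring.
  move: e; rewrite !H !mulr0 ?addr0 => /eqP; rewrite mulf_eq0 (negbTE two_neq0) /=.
  by move/eqP.
- have e : 2 * ((a22 - a11) * b13 - a13 * (b22 - b11)) = (1) * Fs a11 a12 a13 a22 a23 a33 b11 b12 b13 b22 b23 b33 1 1 0 + (-1) * Fs a11 a12 a13 a22 a23 a33 b11 b12 b13 b22 b23 b33 1 (-1) 0 by rewrite /Fs /det3; ring.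
  move: e; rewrite !H !mulr0 ?addr0 => /eqP; rewrite mulf_eq0 (negbTE two_neq0) /=.
  by move/eqP.
- have e : 2 * ((a22 - a11) * b23 - a23 * (b22 - b11)) = (1) * Fs a11 a12 a13 a22 a23 a33 b11 b12 b13 b22 b23 b33 1 1 0 + (1) * Fs a11 a12 a13 a22 a23 a33 b11 b12 b13 b22 b23 b33 1 (-1) 0 by rewrite /Fs /det3; ring.
  move: e; rewrite !H !mulr0 ?addr0 => /eqP; rewrite mulf_eq0 (negbTE two_neq0) /=.
  by move/eqP.
- have e : 2 * ((a33 - a11) * b12 - a12 * (b33 - b11)) = (-1) * Fs a11 a12 a13 a22 a23 a33 b11 b12 b13 b22 b23 b33 1 0 1 + (1) * Fs a11 a12 a13 a22 a23 a33 b11 b12 b13 b22 b23 b33 1 0 (-1) by rewrite /Fs /det3; ring.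
  move: e; rewrite !H !mulr0 ?addr0 => /eqP; rewrite mulf_eq0 (negbTE two_neq0) /=.
  by move/eqP.
- have e : 2 * ((a33 - a11) * b13 - a13 * (b33 - b11)) = (1) * Fs a11 a12 a13 a22 a23 a33 b11 b12 b13 b22 b23 b33 1 1 0 + (-1) * Fs a11 a12 a13 a22 a23 a33 b11 b12 b13 b22 b23 b33 1 (-1) 0 + (1) * Fs a11 a12 a13 a22 a23 a33 b11 b12 b13 b22 b23 b33 0 1 1 + (1) * Fs a11 a12 a13 a22 a23 a33 b11 b12 b13 b22 b23 b33 0 1 (-1) by rewrite /Fs /det3; ring.
  move: e; rewrite !H !mulr0 ?addr0 => /eqP; rewrite mulf_eq0 (negbTE two_neq0) /=.
  by move/eqP.
- have e : 2 * ((a33 - a11) * b23 - a23 * (b33 - b11)) = (-1) * Fs a11 a12 a13 a22 a23 a33 b11 b12 b13 b22 b23 b33 1 0 1 + (-1) * Fs a11 a12 a13 a22 a23 a33 b11 b12 b13 b22 b23 b33 1 0 (-1) by rewrite /Fs /det3; ring.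
  move: e; rewrite !H !mulr0 ?addr0 => /eqP; rewrite mulf_eq0 (negbTE two_neq0) /=.
  by move/eqP.
- have e : 2 * (a12 * b13 - a13 * b12) = (2) * Fs a11 a12 a13 a22 a23 a33 b11 b12 b13 b22 b23 b33 1 0 0 by rewrite /Fs /det3; ring.
  move: e; rewrite !H !mulr0 ?addr0 => /eqP; rewrite mulf_eq0 (negbTE two_neq0) /=.
  by move/eqP.
- have e : 2 * (a12 * b23 - a23 * b12) = (-2) * Fs a11 a12 a13 a22 a23 a33 b11 b12 b13 b22 b23 b33 0 1 0 by rewrite /Fs /det3; ring.
  move: e; rewrite !H !mulr0 ?addr0 => /eqP; rewrite mulf_eq0 (negbTE two_neq0) /=.
  by move/eqP.
- have e : 2 * (a13 * b23 - a23 * b13) = (2) * Fs a11 a12 a13 a22 a23 a33 b11 b12 b13 b22 b23 b33 0 0 1 by rewrite /Fs /det3; ring.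
  move: e; rewrite !H !mulr0 ?addr0 => /eqP; rewrite mulf_eq0 (negbTE two_neq0) /=.
  by move/eqP.
Qed.

End Link.


Section Main.
Variable C : numClosedFieldType.

Definition det2 (u1 u2 v1 v2 : C) := u1 * v2 - u2 * v1.
Definition F2 (a11 a12 a22 x y : C) := det2 x y (a11 * x + a12 * y) (a12 * x + a22 * y).

Definition o20 : 'I_2 := @Ordinal 2 0 isT.
Definition o21 : 'I_2 := @Ordinal 2 1 isT.
Lemma sum2 (f : 'I_2 -> C) : \sum_i f i = f o20 + f o21.
Proof.
rewrite !big_ord_recl big_ord0 addr0.
by congr (f _ + f _); apply/val_inj.
Qed.
Lemma ord2P (i : 'I_2) : i = o20 \/ i = o21.
Proof.
case: i => [[|[|k]] Hk].
- by left; apply/val_inj.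
- by right; apply/val_inj.
- by [].
Qed.
Definition p2 (x y : C) : 'cV[C]_2 := \col_i (nth 0 [:: x; y] i).

Lemma link2 (A : 'M[C]_2) (c0 c1 x y : C) : A^T = A ->
  (c0 != 0 \/ c1 != 0) ->
  (c0 *: A + c1 *: 1%:M) *m p2 x y = 0 ->
  F2 (A o20 o20) (A o20 o21) (A o21 o21) x y = 0.
Proof.
move=> As cn H.
have sA i j : A i j = A j i by rewrite -{1}As mxE.
have E (i : 'I_2) : ((c0 *: A + c1 *: 1%:M) *m p2 x y) i ord0 = 0.
  by rewrite H mxE.
move: (E o20) (E o21); rewrite !mxE !sum2 !mxE /= (sA o21 o20) => e1 e2.
rewrite /F2 /det2.
set a11 := A o20 o20; set a12 := A o20 o21; set a22 := A o21 o21.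
have k0 : c0 * (x * (a12 * x + a22 * y) - y * (a11 * x + a12 * y)) =
   x * ((c0 * a12 + c1 * 0) * x + (c0 * a22 + c1 * 1) * y)
   - y * ((c0 * a11 + c1 * 1) * x + (c0 * a12 + c1 * 0) * y) by ring.
have k1 : c1 * (x * (a12 * x + a22 * y) - y * (a11 * x + a12 * y)) =
   - ((a11 * x + a12 * y) * ((c0 * a12 + c1 * 0) * x + (c0 * a22 + c1 * 1) * y)
   - (a12 * x + a22 * y) * ((c0 * a11 + c1 * 1) * x + (c0 * a12 + c1 * 0) * y)) by ring.
rewrite e1 e2 !mulr0 subrr ?oppr0 in k0 k1.
apply/eqP; apply: contraLR isT => dn.
move/eqP: k0; move/eqP: k1; rewrite !mulf_eq0 (negbTE dn) !orbF => /eqP k1 /eqP k0.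
by case: cn; rewrite ?k0 ?k1 eqxx.
Qed.

Lemma core2 (a11 a12 a22 : C) : (forall x y, F2 a11 a12 a22 x y = 0) ->
  a12 = 0 /\ a22 - a11 = 0.
Proof.
move=> H; split.
- by have := H 1 0; rewrite /F2 /det2 => <-; ring.
- by have := H 1 1; rewrite /F2 /det2 => <-; ring.
Qed.

Lemma not_unit0 n (q : 'M[C]_n.+1) : q \in unitmx -> q != 0.
Proof. by apply: contraTneq => ->; rewrite unitmxE det0 unitr0. Qed.

Lemma transf n (P q : 'M[C]_n) : P \in unitmx -> P^T *m q *m P = 0 -> q = 0.
Proof.
move=> Pu H.
have : invmx P^T *m (P^T *m q *m P) *m invmx P = q.
  by rewrite !mulmxA mulVmx ?unitmx_tr // mul1mx -mulmxA mulmxV // mulmx1.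
by rewrite H mulmx0 mul0mx.
Qed.

Lemma pick_out n (W V : {vspace 'M[C]_n}) : (\dim V < \dim W)%N ->
  exists2 x, x \in W & x \notin V.
Proof. by move=> lt; apply/subvPn; apply/negP => /dimvS; rewrite leqNgt lt. Qed.


Lemma main3 (W : {vspace 'M[C]_3}) : \dim W = 3%N ->
  (forall q, q \in W -> q^T = q) ->
  (exists2 q0, q0 \in W & q0 \in unitmx) ->
  exists v : 'cV[C]_3, forall q, q \in W -> q != 0 -> q *m v != 0.
Proof.
move=> dW sW [q0 q0W q0u].
have q0n : q0 != 0 := not_unit0 q0u.
have [P Pu HP] := cong_id (sW _ q0W) q0u.
have [q1 q1W q1n] : exists2 q1, q1 \in W & q1 \notin <[q0]>%VS.
  by apply: pick_out; rewrite dim_vline q0n dW.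
have [q2 q2W q2n] : exists2 q2, q2 \in W & q2 \notin <<[:: q1; q0]>>%VS.
  by apply: pick_out; rewrite dW; apply: leq_ltn_trans (dim_span _) _.
have fX : free [:: q2; q1; q0].
  by rewrite free_cons q2n free_cons span_seq1 q1n seq1_free q0n.
have WX : W = <<[:: q2; q1; q0]>>%VS.
  apply/eqP; rewrite eq_sym eqEdim; apply/andP; split.
    by apply/span_subvP => x; rewrite !inE => /or3P [] /eqP ->.
  by rewrite dW (eqP fX).
have dec q : q \in W -> exists c0 c1 c2, q = c0 *: q2 + c1 *: q1 + c2 *: q0.
  rewrite WX !span_cons span_nil addv0.
  move=> /memv_addP [u /vlineP [c0 ->] [w /memv_addP [u' /vlineP [c1 ->]]]].
  move=> [w' /vlineP [c2 ->] ->] ->.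
  by exists c0, c1, c2; rewrite addrA.
have indep l m nu : l *: q1 + m *: q2 = nu *: q0 -> l = 0 /\ m = 0.
  move=> E.
  have m0 : m = 0.
    apply/eqP; apply: contraNT q2n => mn.
    have -> : q2 = m^-1 *: (nu *: q0 - l *: q1).
      by rewrite -E addrC addKr scalerA mulVf // scale1r.
    apply: memvZ; apply: memvB; apply: memvZ; apply: memv_span;
      by rewrite !inE eqxx ?orbT.
  split => //; move: E; rewrite m0 scale0r addr0 => E.
  apply/eqP; apply: contraNT q1n => ln.
  have -> : q1 = (l^-1 * nu) *: q0 by rewrite -scalerA -E scalerA mulVf // scale1r.
  by apply: memvZ; apply: memv_line.
pose A := P^T *m q1 *m P; pose B := P^T *m q2 *m P.
have As : A^T = A by rewrite /A !trmx_mul trmxK (sW _ q1W) mulmxA.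
have Bs : B^T = B by rewrite /B !trmx_mul trmxK (sW _ q2W) mulmxA.
have sA i j : A i j = A j i by rewrite -{1}As mxE.
have sB i j : B i j = B j i by rewrite -{1}Bs mxE.
have Tq q c0 c1 c2 : q = c0 *: q2 + c1 *: q1 + c2 *: q0 ->
    P^T *m q *m P = c0 *: B + c1 *: A + c2 *: 1%:M.
  move=> ->; rewrite -HP /A /B !mulmxDr !mulmxDl.
  by rewrite -!scalemxAr -!scalemxAl.
apply: NNPP => Hn.
have Hbad x y z : Fs (A o30 o30) (A o30 o31) (A o30 o32) (A o31 o31) (A o31 o32)
   (A o32 o32) (B o30 o30) (B o30 o31) (B o30 o32) (B o31 o31) (B o31 o32)
   (B o32 o32) x y z = 0.
  have [q [qW qn qv]] : exists q, [/\ q \in W, q != 0 & q *m (P *m p3 x y z) = 0].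
    apply: NNPP => Hq; apply: Hn; exists (P *m p3 x y z) => q qW qn.
    by apply/eqP => qv; apply: Hq; exists q; split.
  have [c0 [c1 [c2 qe]]] := dec q qW.
  apply: (@link3 _ _ _ c0 c1 c2) => //.
    case: (eqVneq c0 0) => [c00|]; last by left.
    case: (eqVneq c1 0) => [c10|]; last by right; left.
    case: (eqVneq c2 0) => [c20|]; last by right; right.
    by move: qn; rewrite qe c00 c10 c20 !scale0r !addr0 eqxx.
  by rewrite -(Tq _ _ _ _ qe) -!mulmxA qv mulmx0.
have [l [m [lm [e1 e2 e3 e4 e5]]]] := core3 Hbad.
set nu := l * A o30 o30 + m * B o30 o30.
have key : l *: A + m *: B - nu *: 1%:M = 0.
  clearbody A B.
  apply/matrixP => i j; rewrite !mxE.
  case: (ord3P i) => ->; case: (ord3P j) => -> /=;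
  rewrite ?mulr1 ?mulr0 ?subr0 ?(sA o31 o30, sA o32 o30, sA o32 o31, sB o31 o30, sB o32 o30, sB o32 o31);
  first [ by rewrite /nu; ring
        | by rewrite -[RHS]e1 /nu; ring
        | by rewrite -[RHS]e2 /nu; ring
        | by rewrite -[RHS]e3; ring
        | by rewrite -[RHS]e4; ring
        | by rewrite -[RHS]e5; ring ].
have : P^T *m (l *: q1 + m *: q2 - nu *: q0) *m P = 0.
  by rewrite !mulmxDr !mulmxDl mulmxN mulNmx -!scalemxAr -!scalemxAl HP -/A -/B.
move/(transf Pu)/eqP; rewrite subr_eq0 => /eqP /indep [l0 m0].
by case: lm; rewrite ?l0 ?m0 eqxx.
Qed.
Lemma main2 (W : {vspace 'M[C]_2}) : \dim W = 2%N ->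
  (forall q, q \in W -> q^T = q) ->
  (exists2 q0, q0 \in W & q0 \in unitmx) ->
  exists v : 'cV[C]_2, forall q, q \in W -> q != 0 -> q *m v != 0.
Proof.
move=> dW sW [q0 q0W q0u].
have q0n : q0 != 0 := not_unit0 q0u.
have [P Pu HP] := cong_id (sW _ q0W) q0u.
have [q1 q1W q1n] : exists2 q1, q1 \in W & q1 \notin <[q0]>%VS.
  by apply: pick_out; rewrite dim_vline q0n dW.
have fX : free [:: q1; q0].
  by rewrite free_cons span_seq1 q1n seq1_free q0n.
have WX : W = <<[:: q1; q0]>>%VS.
  apply/eqP; rewrite eq_sym eqEdim; apply/andP; split.
    by apply/span_subvP => x; rewrite !inE => /orP [] /eqP ->.
  by rewrite dW (eqP fX).
have dec q : q \in W -> exists c0 c1, q = c0 *: q1 + c1 *: q0.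
  rewrite WX !span_cons span_nil addv0.
  move=> /memv_addP [u /vlineP [c0 ->] [w /vlineP [c1 ->] ->]].
  by exists c0, c1.
pose A := P^T *m q1 *m P.
have As : A^T = A by rewrite /A !trmx_mul trmxK (sW _ q1W) mulmxA.
have sA i j : A i j = A j i by rewrite -{1}As mxE.
have Tq q c0 c1 : q = c0 *: q1 + c1 *: q0 ->
    P^T *m q *m P = c0 *: A + c1 *: 1%:M.
  move=> ->; rewrite -HP /A !mulmxDr !mulmxDl.
  by rewrite -!scalemxAr -!scalemxAl.
apply: NNPP => Hn.
have Hbad x y : F2 (A o20 o20) (A o20 o21) (A o21 o21) x y = 0.
  have [q [qW qn qv]] : exists q, [/\ q \in W, q != 0 & q *m (P *m p2 x y) = 0].
    apply: NNPP => Hq; apply: Hn; exists (P *m p2 x y) => q qW qn.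
    by apply/eqP => qv; apply: Hq; exists q; split.
  have [c0 [c1 qe]] := dec q qW.
  apply: (@link2 _ c0 c1) => //.
    case: (eqVneq c0 0) => [c00|]; last by left.
    case: (eqVneq c1 0) => [c10|]; last by right.
    by move: qn; rewrite qe c00 c10 !scale0r !addr0 eqxx.
  by rewrite -(Tq _ _ _ qe) -!mulmxA qv mulmx0.
have [e1 e2] := core2 Hbad.
set nu := A o20 o20.
have key : A - nu *: 1%:M = 0.
  clearbody A.
  apply/matrixP => i j; rewrite !mxE.
  case: (ord2P i) => ->; case: (ord2P j) => -> /=;
  rewrite ?mulr1 ?mulr0 ?subr0 ?(sA o21 o20);
  first [ by rewrite /nu; ring
        | by rewrite -[RHS]e1; ring
        | by rewrite -[RHS]e2 /nu; ring ].
have : P^T *m (q1 - nu *: q0) *m P = 0.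
  by rewrite !mulmxDr !mulmxDl mulmxN mulNmx -!scalemxAr -!scalemxAl HP -/A.
move/(transf Pu)/eqP; rewrite subr_eq0 => /eqP q1e.
have : nu *: q0 \in <[q0]>%VS by apply: memvZ; apply: memv_line.
by rewrite -q1e (negbTE q1n).
Qed.
End Main.

End Helpers.

Theorem lemma6p1 (R : realType) (g : nat) (W : {vspace 'M[R[i]]_g}) :
  (g <= 3)%N ->
  \dim W = g ->
  (forall q : 'M[R[i]]_g, q \in W -> is_qform q) ->
  (exists2 q0 : 'M[R[i]]_g, q0 \in W & qf_nondegenerate q0) ->
  exists v : 'cV[R[i]]_g,
    forall q : 'M[R[i]]_g, q \in W -> q != 0 -> ~~ in_qkernel q v.
Proof.
move=> g3 dW sW [q0 q0W q0u].
have sW' q : q \in W -> q^T = q by move/sW/eqP.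
move: g W g3 dW sW sW' q0 q0W q0u => [|[|[|[|g]]]] W g3 dW _ sW q0 q0W q0u.
- by exists 0 => q _; rewrite [q]flatmx0 eqxx.
- by exists 1%:M => q _ qn; rewrite /in_qkernel mulmx1.
- have [v Hv] := Helpers.main2 dW sW (ex_intro2 _ _ q0 q0W q0u).
  by exists v => q qW qn; apply: Hv.
- have [v Hv] := Helpers.main3 dW sW (ex_intro2 _ _ q0 q0W q0u).
  by exists v => q qW qn; apply: Hv.
- by [].
Qed.
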